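(* Let $\mu$ be a probability measure on $[0,1]$. Then $\tilde\rho(\mu)(\bar\mu)=\max_{p\in[0,1]}\tilde\rho(\mu)(p)$, and for every $p\in[0,1]$, \[\tilde\rho(\mu)(\bar\mu)-\tilde\rho(\mu)(p)\le 2|\bar\mu-p|.\] If moreover $\mu$ has a density bounded by some constant $M>0$, then $\rho(\mu)=\tilde\rho(\mu)$ and \[0\le \rho(\mu)(\bar\mu)-\rho(\mu)(p)\le M|\bar\mu-p|^2\qquad\text{for all }p\in[0,1].\]
   Context: For a probability measure $\mu$ on $[0,1]$, let $\bar\mu:=\int_{[0,1]}x\,\mathrm d\mu(x)$, and write $\mu[a,b]$, $\mu[a,b)$, $\mu\{p\}$ for the $\mu$-measure of the corresponding sets. Define functions $\tilde\rho(\mu),\rho(\mu):[0,1]\to\mathbb R$ by \[\tilde\rho(\mu)(p):=\int_0^p\big(\mu[0,\lambda]+\mu[0,\lambda)\big)\,\mathrm d\lambda+\big(\mu[0,p]+\mu[0,p)\big)(\bar\mu-p),\] \[\rho(\mu)(p):=\tilde\rho(\mu)(p)+\mu\{p\}\Big(\int_0^p\mu[0,\lambda]\,\mathrm d\lambda+\int_p^1\mu[\lambda,1]\,\mathrm d\lambda\Big).\] ''$\mu$ has a density bounded by $M$'' means $\mu$ is absolutely continuous with respect to Lebesgue measure with a density $f$ satisfying $f\le M$. *)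

(* Defs.v *)
From HB Require Import structures.
From mathcomp Require Import all_boot all_order all_algebra.
From mathcomp Require Import all_classical all_reals all_analysis.
Set Implicit Arguments. Unset Strict Implicit. Unset Printing Implicit Defensive.
Import Order.TTheory GRing.Theory Num.Theory.
Local Open Scope classical_set_scope.
Local Open Scope ring_scope.

(* A probability measure on [0,1] is represented as a (Borel) probability
   measure [mu] on the real line with [mu `[0,1]%classic = 1]. *)

Section Defs.
Variable R : realType.
Implicit Types (mu : probability (measurableTypeR R) R) (p l : R).

Definition mbar mu : R := Rintegral mu `[0, 1]%classic (fun x => x).

Definition Fc mu l : R := fine (mu `[0, l]%classic).
Definition Fo mu l : R := fine (mu `[0, l[%classic).
Definition Gc mu l : R := fine (mu `[l, 1]%classic).
Definition atom mu p : R := fine (mu [set p]).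

Definition lint (a b : R) (f : R -> R) : R :=
  Rintegral (@lebesgue_measure R) `[a, b]%classic f.

Definition rho_tilde mu p : R :=
  lint 0 p (fun l => Fc mu l + Fo mu l) + (Fc mu p + Fo mu p) * (mbar mu - p).

Definition rho mu p : R :=
  rho_tilde mu p + atom mu p * (lint 0 p (Fc mu) + lint p 1 (Gc mu)).

Definition has_density_bounded_by mu (M : R) : Prop :=
  exists f : R -> R,
    measurable_fun setT f /\ (forall x, 0 <= f x <= M) /\
    forall A : set R, measurable A ->
      mu A = (\int[@lebesgue_measure R]_(x in A) (f x)%:E)%E.

End Defs.

(* Main.v *)
Require Import Defs.
From HB Require Import structures.
From mathcomp Require Import all_boot all_order all_algebra.
From mathcomp Require Import all_classical all_reals all_analysis.
From mathcomp Require Import ring lra measurable_realfun.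
Import Order.TTheory GRing.Theory Num.Theory.
Import numFieldNormedType.Exports.
Local Open Scope classical_set_scope.
Local Open Scope ring_scope.
Section S.
Variable R : realType.
Local Notation leb := (@lebesgue_measure R).

Lemma bnd_int d (T : measurableType d) (nu : {measure set T -> \bar R}) (A : set T) (g : T -> R) (c : R) :
  measurable A -> (nu A < +oo)%E -> measurable_fun A g ->
  (forall x, A x -> `|g x| <= c) -> nu.-integrable A (EFin \o g).
Proof.
move=> mA Afin mg hb; apply: measurable_bounded_integrable => //.
exists c; split; first exact: num_real.
by move=> M cM x Ax; apply: le_trans (hb x Ax) (ltW cM).
Qed.

Lemma leb_itv_fin (a b : R) : (leb `[a, b] < +oo)%E.
Proof. by rewrite lebesgue_measure_itv; case: ifP => _ //=; rewrite ltry. Qed.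

Lemma nd_int (g : R -> R) a b c : nondecreasing_fun g ->
  (forall x, a <= x <= b -> `|g x| <= c) -> leb.-integrable `[a, b] (EFin \o g).
Proof.
move=> ndg hb; apply: (@bnd_int _ _ leb `[a, b] g c) => //.
- exact: leb_itv_fin.
- exact: (@nondecreasing_measurable R `[a, b] g (measurable_itv _) ndg).
Qed.

Lemma lint_cst (a b c : R) : a <= b -> lint a b (fun _ => c) = c * (b - a).
Proof.
move=> ab; rewrite /lint Rintegral_cst //; congr (_ * _).
have := lebesgue_measure_itv `[a, b]; rewrite /=.
case: ifP => [_ -> //|/negbT]; rewrite lte_fin -leNgt => ba ->.
have ab2 : a = b by apply: le_anti; rewrite ab ba.
by rewrite ab2 subrr.

Qed.

Lemma lint_le (a b : R) (g1 g2 : R -> R) : leb.-integrable `[a, b] (EFin \o g1) ->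
  leb.-integrable `[a, b] (EFin \o g2) ->
  (forall x, a <= x <= b -> g1 x <= g2 x) -> lint a b g1 <= lint a b g2.
Proof.
move=> i1 i2 h; apply: le_Rintegral => // x; rewrite /= in_itv /=; exact: h.
Qed.

Lemma lint_split (g : R -> R) (a b : R) : 0 <= a <= b ->
  leb.-integrable `[0, b] (EFin \o g) ->
  lint 0 b g - lint 0 a g = lint a b g.
Proof.
move=> /andP[a0 ab] ig; rewrite /lint.
rewrite (@Rintegral_itvB _ g (BLeft 0) (BRight b) a) ?bnd_simp //.
rewrite Rintegral_itv_obnd_cbnd //.
apply: integrableS ig => //; apply: subset_itvr; by rewrite bnd_simp.
Qed.
Lemma isd (a x : R) : is_derive x 1 (fun y : R => 2^-1 * (y - a)^+2) (x - a).
Proof.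
apply: is_derive_eq.
rewrite subr0 /GRing.scale /=. by field.
Qed.
Lemma cF (a x : R) : {for x, continuous (fun y : R => 2^-1 * (y - a)^+2)}.
Proof.
apply: differentiable_continuous; apply/derivable1_diffP.
exact: (@ex_derive _ _ _ _ _ _ _ (isd a x)).
Qed.
Lemma int_lin (a b : R) : a <= b ->
  lint a b (fun x => x - a) = 2^-1 * (b - a)^+2.
Proof.
rewrite le_eqVlt => /predU1P[<-|ab].
  by rewrite /lint set_itv1 Rintegral_set1 subrr expr0n mulr0.
rewrite /lint /Rintegral (@continuous_FTC2 _ _ (fun y : R => 2^-1 * (y - a)^+2))//.
- by rewrite subrr expr0n mulr0 sube0.
- apply: continuous_in_subspaceT => x _. 
  by apply: continuousB => //; exact: cvg_cst.
- split.
  + move=> x _; exact: (@ex_derive _ _ _ _ _ _ _ (isd a x)).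
  + by apply: cvg_at_right_filter; exact: cF.
  + by apply: cvg_at_left_filter; exact: cF.
- by move=> x _; rewrite derive1E (@derive_val _ _ _ _ _ _ _ (isd a x)).
Qed.

Lemma aff_int (a b c k : R) : 0 <= k -> a <= b ->
  leb.-integrable `[a, b] (EFin \o (fun x => c + k * (x - a))).
Proof.
move=> k0 ab; apply: (@nd_int _ a b (`|c| + k * (b - a))).
  by move=> x y xy; rewrite lerD2l ler_wpM2l // lerD2r.
move=> x /andP[ax xb]; apply: le_trans (ler_normD _ _) _.
rewrite lerD2l ger0_norm ?mulr_ge0 ?subr_ge0 //.
by rewrite ler_wpM2l // lerD2r.
Qed.

Lemma lint_aff (a b c k : R) : 0 <= k -> a <= b ->
  lint a b (fun x => c + k * (x - a)) = c * (b - a) + k * (2^-1 * (b - a)^+2).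
Proof.
move=> k0 ab.
have i1 : leb.-integrable `[a, b] (EFin \o (fun x => x - a)).
  by have := aff_int a b 0 1 ler01 ab; apply: eq_integrable => // x _ /=; rewrite add0r mul1r.
have i2 : leb.-integrable `[a, b] (EFin \o (fun _ => c)).
  by have := aff_int a b c 0 (lexx 0) ab; apply: eq_integrable => // x _ /=; rewrite mul0r addr0.
have i3 : leb.-integrable `[a, b] (EFin \o (fun x => k * (x - a))).
  by have := aff_int a b 0 k k0 ab; apply: eq_integrable => // x _ /=; rewrite add0r.
rewrite /lint RintegralD // RintegralZl //.
by rewrite -/(lint a b _) -/(lint a b _) lint_cst // int_lin.
Qed.

Section Main.
Variable mu : probability (measurableTypeR R) R.

Definition G := fun l => Fc mu l + Fo mu l.

Lemma fine01 (A : set R) : measurable A -> 0 <= fine (mu A) <= 1.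
Proof.
move=> mA; rewrite fine_ge0 ?measure_ge0 //=.
by rewrite -lee_fin fineK ?fin_num_measure //; exact: probability_le1.
Qed.

Lemma fine_mono (A B : set R) : measurable A -> measurable B -> A `<=` B ->
  fine (mu A) <= fine (mu B).
Proof.
move=> mA mB AB; rewrite fine_le ?fin_num_measure //.
by apply: le_measure => //; rewrite inE.
Qed.

Lemma Gnd : nondecreasing_fun G.
Proof.
move=> x y xy; rewrite /G /Fc /Fo lerD //; apply: fine_mono => //.
  by apply: subset_itvl; rewrite bnd_simp.
by apply: subset_itvl; rewrite bnd_simp.
Qed.

Lemma G02 l : 0 <= G l <= 2.
Proof.
rewrite /G /Fc /Fo.
have /andP[h1 h2] := @fine01 `[0, l]%classic (measurable_itv _).
have /andP[h3 h4] := @fine01 `[0, l[%classic (measurable_itv _).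
apply/andP; split; first exact: addr_ge0.
by rewrite -[2]/(1 + 1); exact: lerD.
Qed.

Lemma iG (a b : R) : leb.-integrable `[a, b] (EFin \o G).
Proof.
apply: (@nd_int _ a b 2 Gnd) => x _.
have /andP[h1 h2] := G02 x; by rewrite ger0_norm.
Qed.

Lemma cst_int (a b c : R) : leb.-integrable `[a, b] (EFin \o (fun _ => c)).
Proof. by apply: (@nd_int _ a b `|c|) => // x y. Qed.

Lemma mbar01 : mu `[0%R, 1%R]%classic = 1%E -> 0 <= mbar mu <= 1.
Proof.
move=> h; rewrite /mbar; apply/andP; split.
  by apply: Rintegral_ge0 => x; rewrite /= in_itv /= => /andP[].
have fin : (mu `[0%R, 1%R]%classic < +oo)%E by rewrite h ltry.
have i1 : mu.-integrable `[0, 1]%classic (EFin \o (fun x : R => x)).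
  apply: (@bnd_int _ _ mu _ _ 1) => //.
  by move=> x; rewrite /= in_itv /= => /andP[x0 x1]; rewrite ger0_norm.
have i2 : mu.-integrable `[0, 1]%classic (EFin \o (fun x : R => 1)).
  apply: (@bnd_int _ _ mu _ _ 1) => //.
  by move=> x _; rewrite normr1.
apply: le_trans (le_Rintegral _ i1 i2 _) _ => //.
  by move=> x; rewrite /= in_itv /= => /andP[].
rewrite Rintegral_cst // mul1r.
by have /andP[] := @fine01 `[0%R, 1%R]%classic (measurable_itv _).
Qed.

Lemma rt_diff p : 0 <= p <= 1 -> 0 <= mbar mu <= 1 ->
  rho_tilde mu (mbar mu) - rho_tilde mu p =
  if p <= mbar mu then lint p (mbar mu) G - G p * (mbar mu - p)
  else G p * (p - mbar mu) - lint (mbar mu) p G.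
Proof.
set q := mbar mu; move=> /andP[p0 p1] /andP[q0 q1].
rewrite /rho_tilde -/q -/(G q) -/(G p) -/G subrr mulr0 addr0.
case: ifP => pq.
  by rewrite -(@lint_split G p q) ?p0 ?pq //; [ring | exact: iG].
have qp : q <= p by apply: ltW; rewrite ltNge pq.
by rewrite -(@lint_split G q p) ?q0 ?qp //; [ring | exact: iG].
Qed.

Lemma rt_bounds p : 0 <= p <= 1 -> 0 <= mbar mu <= 1 ->
  0 <= rho_tilde mu (mbar mu) - rho_tilde mu p <= 2 * `|mbar mu - p|.
Proof.
move=> hp hq; rewrite rt_diff //; set q := mbar mu.
have /andP[Gp0 Gp2] := G02 p.
case: ifP => pq.
  have L : G p * (q - p) <= lint p q G.
    rewrite -lint_cst //; apply: lint_le; [exact: cst_int|exact: iG|].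
    by move=> x /andP[px _]; exact: Gnd.
  have U : lint p q G <= 2 * (q - p).
    rewrite -lint_cst //; apply: lint_le; [exact: iG|exact: cst_int|].
    by move=> x _; have /andP[] := G02 x.
  have h : 0 <= G p * (q - p) by rewrite mulr_ge0 // subr_ge0.
  rewrite ger0_norm ?subr_ge0 //; apply/andP; split; lra.
have qp : q <= p by apply: ltW; rewrite ltNge pq.
have L : lint q p G <= G p * (p - q).
  rewrite -lint_cst //; apply: lint_le; [exact: iG|exact: cst_int|].
  by move=> x /andP[_ xp]; exact: Gnd.
have L0 : 0 <= lint q p G.
  by apply: Rintegral_ge0 => x _; have /andP[] := G02 x.
have h : G p * (p - q) <= 2 * (p - q) by rewrite ler_wpM2r // subr_ge0.
rewrite distrC ger0_norm ?subr_ge0 //; apply/andP; split; lra.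
Qed.

Section Dens.
Variables (M : R) (f : R -> R).
Hypothesis M0 : 0 < M.
Hypothesis mf : measurable_fun setT f.
Hypothesis f0M : forall x, 0 <= f x <= M.
Hypothesis hd : forall A : set R, measurable A ->
      mu A = (\int[@lebesgue_measure R]_(x in A) (f x)%:E)%E.

Lemma fi (a b : R) : leb.-integrable `[a, b] (EFin \o f).
Proof.
apply: (@bnd_int _ _ leb _ _ M) => //.
- exact: leb_itv_fin.
- exact: measurable_funS mf.
- by move=> x _; have /andP[h1 h2] := f0M x; rewrite ger0_norm.
Qed.

Lemma Fc_eq l : Fc mu l = lint 0 l f.
Proof. by rewrite /Fc /lint /Rintegral hd. Qed.

Lemma Fo_eq l : Fo mu l = lint 0 l f.
Proof.
rewrite /Fo /lint hd // -/(Rintegral leb _ _) Rintegral_itv_bndo_bndc //.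
apply: integrableS (fi 0 l) => //; apply: subset_itvl; rewrite bnd_simp.
exact: lexx.
Qed.

Lemma atom_eq p : atom mu p = 0.
Proof. by rewrite /atom hd // integral_set1. Qed.

Lemma G_eq l : G l = 2 * lint 0 l f.
Proof. by rewrite /G Fc_eq Fo_eq mulr2n mulrDl mul1r. Qed.

Lemma Gdiff x y : 0 <= x <= y -> G y - G x <= 2 * M * (y - x).
Proof.
move=> /andP[x0 xy]; rewrite !G_eq -mulrBr lint_split ?x0 ?xy ?fi //.
rewrite -mulrA ler_wpM2l // -lint_cst //; apply: lint_le; [exact: fi|exact: cst_int|].
by move=> z _; have /andP[] := f0M z.
Qed.

Lemma rho_eq p : rho mu p = rho_tilde mu p.
Proof. by rewrite /rho atom_eq mul0r addr0. Qed.

Lemma rho_bound p : 0 <= p <= 1 -> 0 <= mbar mu <= 1 ->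
  0 <= rho mu (mbar mu) - rho mu p <= M * `|mbar mu - p| ^+ 2.
Proof.
move=> hp hq; rewrite !rho_eq.
have /andP[-> _] := rt_bounds p hp hq; rewrite /=.
have /andP[p0 p1] := hp; have /andP[q0 q1] := hq.
rewrite rt_diff //; set q := mbar mu.
have M2 : 0 <= 2 * M by rewrite mulr_ge0 // ltW.
case: ifP => pq.
  have U : lint p q G <= lint p q (fun x => G p + (2 * M) * (x - p)).
    apply: lint_le; [exact: iG|exact: aff_int|].
    move=> x /andP[px _]; have := @Gdiff p x; rewrite p0 px => /(_ isT); lra.
  rewrite lint_aff // in U.
  have E : 2 * M * (2^-1 * (q - p) ^+ 2) = M * (q - p) ^+ 2 by field.
  rewrite E in U; rewrite ger0_norm ?subr_ge0 //; lra.
have qp : q <= p by apply: ltW; rewrite ltNge pq.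
have L : lint q p (fun x => (G p - 2 * M * (p - q)) + (2 * M) * (x - q)) <= lint q p G.
  apply: lint_le; [exact: aff_int|exact: iG|].
  move=> x /andP[qx xp]; have := @Gdiff x p; rewrite (le_trans q0 qx) xp => /(_ isT).
  lra.
rewrite lint_aff // in L.
have E : 2 * M * (2^-1 * (p - q) ^+ 2) = M * (p - q) ^+ 2 by field.
rewrite E in L; rewrite distrC ger0_norm ?subr_ge0 //; nra.
Qed.
End Dens.
End Main.
End S.

Theorem lemma2p1 (R : realType) (mu : probability (measurableTypeR R) R) :
  mu `[0, 1]%classic = 1%E ->
  [/\ 0 <= mbar mu <= 1,
      (forall p : R, 0 <= p <= 1 -> rho_tilde mu p <= rho_tilde mu (mbar mu)),
      (forall p : R, 0 <= p <= 1 ->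
         rho_tilde mu (mbar mu) - rho_tilde mu p <= 2 * `|mbar mu - p|) &
      (forall M : R, 0 < M -> has_density_bounded_by mu M ->
         (forall p : R, 0 <= p <= 1 -> rho mu p = rho_tilde mu p) /\
         (forall p : R, 0 <= p <= 1 ->
            0 <= rho mu (mbar mu) - rho mu p <= M * `|mbar mu - p| ^+ 2))].
Proof.
move=> h; have hq := @mbar01 R mu h.
split => //.
- move=> p hp; have /andP[h1 _] := @rt_bounds R mu p hp hq.
  by rewrite -subr_ge0.
- by move=> p hp; have /andP[_ h2] := @rt_bounds R mu p hp hq.
- move=> M M0 [f [mf [f0M hd]]]; split.
    by move=> p _; exact: (@rho_eq R mu f hd p).
  by move=> p hp; exact: (@rho_bound R mu M f M0 mf f0M hd p hp hq).
Qed.
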